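(* Let $V=\{1,\dots,n\}$ and let $D,D'$ be self-adjoint $n\times n$ complex matrices, with associated weighted graphs $G$ and $G'$ on $V$, both connected. Suppose there are pairs $(i_1,j_1),\dots,(i_k,j_k)$ of distinct vertices such that the $2k$ vertices $i_1,j_1,\dots,i_k,j_k$ are pairwise distinct (the edges $\{i_s,j_s\}$ are pairwise unconnected), such that $D$ and $D'$ have the same entries except at the positions $(i_s,j_s)$ and $(j_s,i_s)$, and such that for each $s$ exactly one of $D_{i_sj_s}$, $D'_{i_sj_s}$ is zero and the other has modulus $1/w_s$ with $w_s\in(0,\infty)$ (so $G$ and $G'$ differ by addition or deletion of the edges $\{i_s,j_s\}$ of weights $w_s$). Let $x,y\in V$, let $d=d^D(x,y)$, $d'=d^{D'}(x,y)$, and put $$m=\max_{s=1,\dots,k}\frac{d^D(i_s,j_s)}{w_s},\qquad m'=\max_{s=1,\dots,k}\frac{d^{D'}(i_s,j_s)}{w_s}.$$ Then $$\frac{d}{1+m}\le d'\le (1+m')\,d.$$ In the particular case where $k=1$ and the single added/removed edge, of weight $w$, connects $x$ and $y$, one has $$\left|\frac{1}{d}-\frac{1}{d'}\right|\le\frac{1}{w}.$$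
   Context: For a self-adjoint $n\times n$ matrix $M$, the weighted graph associated with $M$ has vertex set $\{1,\dots,n\}$ and an edge $\{i,j\}$ ($i\neq j$) of weight $|M_{ij}|^{-1}$ whenever $M_{ij}\neq 0$. The noncommutative distance is $d^M(i,j)=\sup\{|a(i)-a(j)| : a\in\mathbb{C}^n,\ \|[M,\pi(a)]\|\le 1\}$, where $\pi(a)=\mathrm{diag}(a(1),\dots,a(n))$ and $\|\cdot\|$ is the operator norm. *)

(* Defs.v *)
From HB Require Import structures.
From mathcomp Require Import all_boot all_order all_algebra.
From mathcomp Require Import all_classical all_reals.
From mathcomp Require Export complex.
Set Implicit Arguments. Unset Strict Implicit. Unset Printing Implicit Defensive.
Import Order.TTheory GRing.Theory Num.Theory.
Local Open Scope ring_scope.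
Local Open Scope classical_set_scope.

Section NCDist.
Variables (R : realType) (n : nat).

Definition cmod (z : R[i]) : R := Normc.normc z.

Definition vnorm (v : 'cV[R[i]]_n) : R :=
  Num.sqrt (\sum_(p < n) cmod (v p ord0) ^+ 2).

Definition opnorm (A : 'M[R[i]]_n) : R :=
  sup [set vnorm (A *m v) | v in [set v : 'cV[R[i]]_n | vnorm v <= 1]].

Definition self_adjoint (M : 'M[R[i]]_n) : Prop :=
  forall p q, M q p = (M p q)^*.

Definition piv (a : 'rV[R[i]]_n) : 'M[R[i]]_n := diag_mx a.

Definition commut (M X : 'M[R[i]]_n) : 'M[R[i]]_n := M *m X - X *m M.

Definition ncdist (M : 'M[R[i]]_n) (p q : 'I_n) : R :=
  sup [set cmod (a ord0 p - a ord0 q) |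
        a in [set a : 'rV[R[i]]_n | opnorm (commut M (piv a)) <= 1]].

(* adjacency relation of the weighted graph associated with M
   (edge {p,q}, p != q, whenever M p q != 0; its weight is |M p q|^-1) *)
Definition adj (M : 'M[R[i]]_n) : rel 'I_n :=
  fun p q => (p != q) && (M p q != 0).

Definition graph_connected (M : 'M[R[i]]_n) : Prop :=
  forall p q : 'I_n, connect (adj M) p q.

End NCDist.

(* Main.v *)
Require Import Defs.
From HB Require Import structures.
From mathcomp Require Import all_boot all_order all_algebra.
From mathcomp Require Import all_classical all_reals.
From mathcomp Require Import complex.
From mathcomp Require Import ring lra.
Import Order.TTheory GRing.Theory Num.Theory.
Set Implicit Arguments. Unset Strict Implicit. Unset Printing Implicit Defensive.
Local Open Scope ring_scope.
Local Open Scope classical_set_scope.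

Section Basic.
Variable R : realType.
Local Notation C := (R[i]).

Lemma cmod_normC (z : C) : `|z| = ((cmod z)%:C)%C.
Proof. reflexivity. Qed.

Lemma cmod_conj (z : C) : cmod (Num.conj z) = cmod z.
Proof. apply: complexI; rewrite -!cmod_normC. exact: norm_conjC. Qed.

Lemma cmod_ge0 (z : C) : 0 <= cmod z.
Proof. by rewrite -ler0c -cmod_normC. Qed.

Lemma cmod0 : cmod (0 : C) = 0.
Proof. exact: Normc.normc0. Qed.

Lemma cmod1 : cmod (1 : C) = 1.
Proof. exact: Normc.normc1. Qed.

Lemma cmodM (x y : C) : cmod (x * y) = cmod x * cmod y.
Proof. exact: Normc.normcM. Qed.

Lemma cmodD (x y : C) : cmod (x + y) <= cmod x + cmod y.
Proof. exact: (@le_normcD R x y). Qed.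

Lemma cmodN (x : C) : cmod (- x) = cmod x.
Proof. exact: (@normcN R x). Qed.

Lemma cmodB (x y : C) : cmod (x - y) = cmod (y - x).
Proof. by rewrite -opprB cmodN. Qed.

Lemma cmod_eq0 (x : C) : (cmod x == 0) = (x == 0).
Proof.
apply/eqP/eqP; first exact: Normc.eq0_normc.
by move=> ->; exact: cmod0.
Qed.

Lemma cmodR (r : R) : cmod ((r%:C)%C) = `|r|.
Proof. by rewrite /cmod /Normc.normc /= expr0n /= addr0 sqrtr_sqr. Qed.

Lemma cmod_sum (I : finType) (F : I -> C) :
  cmod (\sum_i F i) <= \sum_i cmod (F i).
Proof.
rewrite -lecR -cmod_normC rmorph_sum /=.
apply: le_trans (ler_norm_sum _ _ _) _.
by apply: ler_sum => i _; rewrite cmod_normC.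
Qed.

Lemma sqr_le (a b : R) : 0 <= a -> a <= b -> a ^+ 2 <= b ^+ 2.
Proof. by move=> a0 ab; rewrite !expr2; apply: ler_pM. Qed.

End Basic.
Section Vec.
Variables (R : realType) (n : nat).
Local Notation C := (R[i]).
Implicit Types (u v : 'cV[C]_n) (A B : 'M[C]_n).

Definition ss v : R := \sum_(p < n) cmod (v p ord0) ^+ 2.

Lemma vnormE v : vnorm v = Num.sqrt (ss v). Proof. by []. Qed.

Lemma ss_ge0 v : 0 <= ss v.
Proof. by apply: sumr_ge0 => p _; apply: sqr_ge0. Qed.

Lemma vnorm_ge0 v : 0 <= vnorm v.
Proof. exact: sqrtr_ge0. Qed.

Lemma vnorm_sqr v : vnorm v ^+ 2 = ss v.
Proof. by rewrite vnormE sqr_sqrtr // ss_ge0. Qed.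

Lemma cmod_le_ss v p : cmod (v p ord0) ^+ 2 <= ss v.
Proof.
rewrite /ss (bigD1 p) //= lerDl; apply: sumr_ge0 => q _; exact: sqr_ge0.
Qed.

Lemma cmod_le_vnorm v p : cmod (v p ord0) <= vnorm v.
Proof.
rewrite -(ger0_norm (cmod_ge0 (v p ord0))) -sqrtr_sqr vnormE.
exact: ler_wsqrtr (cmod_le_ss v p).
Qed.

Lemma vnorm0 : vnorm (0 : 'cV[C]_n) = 0.
Proof.
rewrite vnormE /ss big1 ?sqrtr0 // => p _; by rewrite mxE cmod0 expr0n.
Qed.

Lemma ss_scale c v : ss (c *: v) = cmod c ^+ 2 * ss v.
Proof.
rewrite /ss mulr_sumr; apply: eq_bigr => p _.
by rewrite mxE cmodM exprMn.
Qed.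

Lemma vnorm_scale c v : vnorm (c *: v) = cmod c * vnorm v.
Proof.
rewrite !vnormE ss_scale sqrtrM ?sqr_ge0 // sqrtr_sqr ger0_norm //.
exact: cmod_ge0.
Qed.

Lemma mink_aux (A B x y : R) : 0 < A -> 0 < B ->
  (x * A + y * B) ^+ 2 <= (A + B) * (x ^+ 2 * A + y ^+ 2 * B).
Proof.
move=> A0 B0.
have h : 0 <= A * B * (x - y) ^+ 2 by apply: mulr_ge0; [apply: mulr_ge0; apply: ltW|apply: sqr_ge0].
rewrite -subr_ge0.
have -> : (A + B) * (x ^+ 2 * A + y ^+ 2 * B) - (x * A + y * B) ^+ 2 = A * B * (x - y) ^+ 2 by ring.
exact: h.
Qed.

Lemma ss_add_zero u v : ss u = 0 -> ss (u + v) <= ss v.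
Proof.
move=> hu; apply: ler_sum => p _; rewrite mxE.
have up : cmod (u p ord0) = 0.
  apply/eqP; rewrite -sqrf_eq0; apply/eqP/le_anti.
  by rewrite sqr_ge0 andbT -hu cmod_le_ss.
apply: sqr_le; first exact: cmod_ge0.
by apply: le_trans (cmodD _ _) _; rewrite up add0r.
Qed.

Lemma vnorm_add u v : vnorm (u + v) <= vnorm u + vnorm v.
Proof.
have vn0 w : vnorm w = 0 -> ss w = 0.
  by move=> /eqP; rewrite vnormE sqrtr_eq0 => h; apply/le_anti; rewrite h ss_ge0.
have [hu|hu] := eqVneq (vnorm u) 0.
  rewrite hu add0r !vnormE; apply: ler_wsqrtr; exact: ss_add_zero (vn0 _ hu).
have [hv|hv] := eqVneq (vnorm v) 0.
  rewrite hv addr0 addrC !vnormE; apply: ler_wsqrtr; exact: ss_add_zero (vn0 _ hv).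
have A0 : 0 < vnorm u by rewrite lt_def hu vnorm_ge0.
have B0 : 0 < vnorm v by rewrite lt_def hv vnorm_ge0.
rewrite vnormE -(ger0_norm (addr_ge0 (ltW A0) (ltW B0))) -sqrtr_sqr.
apply: ler_wsqrtr.
set A := vnorm u; set B := vnorm v.
apply: (@le_trans _ _ (\sum_(p < n) (A + B) * ((cmod (u p ord0) / A) ^+ 2 * A
        + (cmod (v p ord0) / B) ^+ 2 * B))).
  apply: ler_sum => p _; rewrite mxE.
  apply: le_trans (mink_aux _ _ A0 B0).
  rewrite !divfK ?gt_eqF //.
  apply: sqr_le; [exact: cmod_ge0| exact: cmodD].
rewrite -mulr_sumr big_split /= -!mulr_suml.
have e1 w (W : R) : 0 < W -> vnorm w = W -> (\sum_(i < n) (cmod (w i ord0) / W) ^+ 2) * W = W.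
  move=> W0 hW.
  have Wn : W != 0 by rewrite gt_eqF.
  rewrite mulr_suml.
  rewrite (eq_bigr (fun i => cmod (w i ord0) ^+ 2 / W)); last first.
    by move=> i _; field.
  by rewrite -mulr_suml -/(ss w) -vnorm_sqr hW; field.
by rewrite (e1 u A) // (e1 v B) // expr2.
Qed.

End Vec.

Section Op.
Variables (R : realType) (n : nat).
Local Notation C := (R[i]).
Implicit Types (u v : 'cV[C]_n) (A B : 'M[C]_n).

Definition OS A := [set vnorm (A *m v) | v in [set v : 'cV[C]_n | vnorm v <= 1]].

Lemma opnorm_bounded A : has_ubound (OS A).
Proof.
exists (Num.sqrt (\sum_(p < n) (\sum_(q < n) cmod (A p q)) ^+ 2)).
move=> _ [v hv <-]; rewrite vnormE; apply: ler_wsqrtr.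
apply: ler_sum => p _; apply: sqr_le; first exact: cmod_ge0.
rewrite mxE; apply: le_trans (cmod_sum _) _.
apply: ler_sum => q _; rewrite cmodM -[X in _ <= X]mulr1.
apply: ler_wpM2l; first exact: cmod_ge0.
exact: le_trans (cmod_le_vnorm _ _) hv.
Qed.

Lemma opnorm_ub A v : vnorm v <= 1 -> vnorm (A *m v) <= opnorm A.
Proof. by move=> hv; apply: ub_le_sup (opnorm_bounded A) _ _; exists v. Qed.

Lemma opnorm_le A c : (forall v, vnorm v <= 1 -> vnorm (A *m v) <= c) -> opnorm A <= c.
Proof.
move=> h; apply: ge_sup.
  by exists (vnorm (A *m 0)), 0 => //=; rewrite vnorm0 ler01.
by move=> _ [v hv <-]; apply: h.
Qed.

Lemma opnorm_ge0 A : 0 <= opnorm A.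
Proof.
apply: le_trans (vnorm_ge0 (A *m 0)) (opnorm_ub _ _).
by rewrite vnorm0 ler01.
Qed.

Lemma opnormD A B : opnorm (A + B) <= opnorm A + opnorm B.
Proof.
apply: opnorm_le => v hv; rewrite mulmxDl.
apply: le_trans (vnorm_add _ _) _.
by apply: lerD; apply: opnorm_ub.
Qed.

Lemma opnormZ c A : opnorm (c *: A) <= cmod c * opnorm A.
Proof.
apply: opnorm_le => v hv; rewrite -scalemxAl vnorm_scale.
by apply: ler_wpM2l; [exact: cmod_ge0| exact: opnorm_ub].
Qed.

Lemma cmod_nb (b : bool) : cmod (b%:R : C) = b%:R.
Proof. by case: b; [exact: cmod1|exact: cmod0]. Qed.

Lemma opnorm_entry A p q : cmod (A p q) <= opnorm A.
Proof.
have -> : A p q = (col q A) p ord0 by rewrite mxE.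
apply: le_trans (cmod_le_vnorm _ _) _.
rewrite colE; apply: opnorm_ub.
rewrite vnormE /ss (bigD1 q) //= big1 ?addr0.
  by rewrite mxE cmod_nb !eqxx expr1n sqrtr1.
by move=> r /negbTE hr; rewrite mxE cmod_nb hr expr0n.
Qed.

Lemma sqr_le1 (x : R) : 0 <= x -> x ^+ 2 <= 1 -> x <= 1.
Proof. by move=> x0 h; rewrite -(ler_pXn2r (n:=2)) // ?expr1n // nnegrE. Qed.

End Op.

Section Sparse.
Variables (R : realType) (n : nat).
Local Notation C := (R[i]).

Lemma opnorm_sparse (F : 'M[C]_n) (c : R) : 0 <= c ->
  (forall p q1 q2, F p q1 != 0 -> F p q2 != 0 -> q1 = q2) ->
  (forall q p1 p2, F p1 q != 0 -> F p2 q != 0 -> p1 = p2) ->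
  (forall p q, cmod (F p q) <= c) -> opnorm F <= c.
Proof.
move=> c0 hrow hcol hb; apply: opnorm_le => v hv.
suff h : ss (F *m v) <= c ^+ 2 * ss v.
  rewrite vnormE; apply: le_trans (ler_wsqrtr h) _.
  rewrite sqrtrM ?sqr_ge0 // sqrtr_sqr ger0_norm // -vnormE.
  by rewrite -[X in _ <= X]mulr1; apply: ler_wpM2l.
apply: (@le_trans _ _ (\sum_(p < n) \sum_(q < n)
          ((F p q != 0)%:R * (c ^+ 2 * cmod (v q ord0) ^+ 2)))).
  apply: ler_sum => p _; rewrite mxE.
  case: (pickP (fun q => F p q != 0)) => [q0 hq0|hnone].
    rewrite (bigD1 q0) //= big1 ?addr0; last first.
      move=> q hq; case: (boolP (F p q != 0)) => [hF|/negbNE/eqP ->]; last by rewrite mul0r.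
      by rewrite (hrow _ _ _ hF hq0) eqxx in hq.
    rewrite (bigD1 q0) //= hq0 mul1r; apply: le_trans (_ : _ <= c ^+ 2 * cmod (v q0 ord0) ^+ 2) _.
      rewrite cmodM exprMn; apply: ler_wpM2r; first exact: sqr_ge0.
      by apply: sqr_le; [exact: cmod_ge0|exact: hb].
    rewrite lerDl; apply: sumr_ge0 => q _; apply: mulr_ge0; first by case: (_ != 0).
    by apply: mulr_ge0; apply: sqr_ge0.
  rewrite big1 ?cmod0 ?expr0n /=; last first.
    by move=> q _; move: (hnone q) => /= /negbFE/eqP ->; rewrite mul0r.
  apply: sumr_ge0 => q _; apply: mulr_ge0; first by case: (_ != 0).
  by apply: mulr_ge0; apply: sqr_ge0.
rewrite exchange_big /= /ss mulr_sumr; apply: ler_sum => q _.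
rewrite -mulr_suml; rewrite -[X in _ <= X]mul1r; apply: ler_wpM2r.
  by apply: mulr_ge0; apply: sqr_ge0.
case: (pickP (fun p => F p q != 0)) => [p0 hp0|hnone].
  rewrite (bigD1 p0) //= hp0 big1 ?addr0 //.
  move=> p hp; case: (boolP (F p q != 0)) => [hF|//].
  by rewrite (hcol _ _ _ hF hp0) eqxx in hp.
rewrite big1 ?ler01 // => p _; by rewrite (hnone p).
Qed.

End Sparse.

Section Dist.
Variables (R : realType) (n : nat).
Local Notation C := (R[i]).
Implicit Types (M : 'M[C]_n) (a : 'rV[C]_n).

Lemma commutE M a p q : commut M (piv a) p q = M p q * (a ord0 q - a ord0 p).
Proof. by rewrite /commut /piv mul_mx_diag mul_diag_mx !mxE; ring. Qed.

Lemma commutZ M c a : commut M (piv (c *: a)) = c *: commut M (piv a).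
Proof. apply/matrixP => p q; rewrite commutE [RHS]mxE commutE !mxE; ring. Qed.

Lemma commut0 M : opnorm (commut M (piv 0)) <= 1.
Proof.
apply: opnorm_le => v _.
have -> : commut M (piv 0) = 0 by apply/matrixP => p q; rewrite commutE !mxE subrr mulr0.
by rewrite mul0mx vnorm0 ler01.
Qed.

Definition DS M p q := [set cmod (a ord0 p - a ord0 q) |
        a in [set a : 'rV[C]_n | opnorm (commut M (piv a)) <= 1]].

Lemma edge_bound M a p q : opnorm (commut M (piv a)) <= 1 ->
  cmod (M p q) * cmod (a ord0 q - a ord0 p) <= 1.
Proof. by move=> h; rewrite -cmodM -commutE; apply: le_trans (opnorm_entry _ _ _) h. Qed.

Lemma path_bound M s p : path (adj M) p s -> exists B, forall a,
  opnorm (commut M (piv a)) <= 1 -> cmod (a ord0 p - a ord0 (last p s)) <= B.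
Proof.
elim: s p => [|r s IH] p /=.
  by move=> _; exists 0 => a _; rewrite subrr cmod0.
move=> /andP[/andP[_ hpr] hp]; have [B hB] := IH r hp.
exists ((cmod (M p r))^-1 + B) => a ha.
have -> : a ord0 p - a ord0 (last r s) = (a ord0 p - a ord0 r) + (a ord0 r - a ord0 (last r s)) by ring.
apply: le_trans (cmodD _ _) _; apply: lerD; last exact: hB.
have cp : 0 < cmod (M p r) by rewrite lt_def cmod_eq0 hpr cmod_ge0.
rewrite cmodB -(ler_pM2l cp) mulfV ?gt_eqF //; exact: edge_bound.
Qed.

Lemma ncdist_bounded M p q : graph_connected M -> has_ubound (DS M p q).
Proof.
move=> hc; move: (hc p q) => /connectP [s hs ->].
have [B hB] := path_bound hs.
by exists B => _ [a ha <-]; apply: hB.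
Qed.

Lemma ncdist_ub M p q a : graph_connected M -> opnorm (commut M (piv a)) <= 1 ->
  cmod (a ord0 p - a ord0 q) <= ncdist M p q.
Proof. by move=> hc ha; apply: ub_le_sup (ncdist_bounded p q hc) _ _; exists a. Qed.

Lemma ncdist_le M p q c : (forall a, opnorm (commut M (piv a)) <= 1 ->
  cmod (a ord0 p - a ord0 q) <= c) -> ncdist M p q <= c.
Proof.
move=> h; apply: ge_sup.
  by exists (cmod ((0 : 'rV[C]_n) ord0 p - (0 : 'rV[C]_n) ord0 q)), 0 => //=; exact: commut0.
by move=> _ [a ha <-]; apply: h.
Qed.

Lemma ncdist_ge0 M p q : graph_connected M -> 0 <= ncdist M p q.
Proof.
move=> hc; apply: le_trans (ncdist_ub p q hc (commut0 M)).
by rewrite !mxE subrr cmod0.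
Qed.

Lemma ncdistC M p q : graph_connected M -> ncdist M p q = ncdist M q p.
Proof.
move=> hc; apply/le_anti/andP; split; apply: ncdist_le => a ha;
  by rewrite cmodB; apply: ncdist_ub.
Qed.

End Dist.

Section Main.
Variables (R : realType) (n : nat).
Local Notation C := (R[i]).

Lemma subE (A B : 'M[C]_n) p q : (A - B) p q = A p q - B p q.
Proof. by rewrite !mxE. Qed.

Lemma main_dir (D D' : 'M[C]_n) k (ii jj : 'I_k -> 'I_n) (w : 'I_k -> R) x y :
  self_adjoint D -> self_adjoint D' -> graph_connected D -> graph_connected D' ->
  injective ii -> injective jj -> (forall s t, ii s != jj t) ->
  (forall p q : 'I_n,
      (forall s, ~ (p = ii s /\ q = jj s) /\ ~ (p = jj s /\ q = ii s)) ->
      D p q = D' p q) ->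
  (forall s, 0 < w s) ->
  (forall s,
      (D (ii s) (jj s) = 0 /\ cmod (D' (ii s) (jj s)) = (w s)^-1) \/
      (D' (ii s) (jj s) = 0 /\ cmod (D (ii s) (jj s)) = (w s)^-1)) ->
  ncdist D x y <= (1 + \big[Num.max/0]_(s < k) (ncdist D (ii s) (jj s) / w s)) * ncdist D' x y.
Proof.
move=> sD sD' cD cD' iI iJ iIJ agr wpos hor.
set m := \big[Num.max/0]_(s < k) _.
have m0 : 0 <= m by apply: bigmax_ge_id.
have m1 : 0 < 1 + m by apply: (@lt_le_trans _ _ 1); [exact: ltr01| rewrite lerDl].
have edge p q : D' p q != D p q -> exists s, (p = ii s /\ q = jj s) \/ (p = jj s /\ q = ii s).
  move=> hne.
  case: (boolP [exists s, ((p == ii s) && (q == jj s)) || ((p == jj s) && (q == ii s))]).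
    move=> /existsP [s /orP [/andP [/eqP h1 /eqP h2] | /andP [/eqP h1 /eqP h2]]];
      [by exists s; left|by exists s; right].
  move=> /existsPn hn; exfalso; move/eqP: hne; apply; symmetry; apply: agr => s.
  move: (hn s); rewrite negb_or !negb_and => /andP [h1 h2].
  split => -[e1 e2]; rewrite e1 e2 !eqxx in h1 h2; by [].
have dm s : cmod (D' (ii s) (jj s) - D (ii s) (jj s)) = (w s)^-1.
  by case: (hor s) => [[-> h]|[-> h]]; rewrite ?subr0 ?sub0r ?cmodN.
have dm' s : cmod (D' (jj s) (ii s) - D (jj s) (ii s)) = (w s)^-1.
  by rewrite sD sD' -rmorphB cmod_conj; exact: dm.
apply: ncdist_le => a ha.
set F := commut D' (piv a) - commut D (piv a).
have FE p q : F p q = (D' p q - D p q) * (a ord0 q - a ord0 p).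
  by rewrite /F subE !commutE mulrBl.
have Fnz p q : F p q != 0 -> exists s, (p = ii s /\ q = jj s) \/ (p = jj s /\ q = ii s).
  move=> hF; apply: edge; apply: contra hF => /eqP e; by rewrite FE e subrr mul0r.
have hF : opnorm F <= m.
  apply: opnorm_sparse => //.
  - move=> p q1 q2 h1 h2.
    have [s1 [[e1 e2]|[e1 e2]]] := Fnz _ _ h1; have [s2 [[e3 e4]|[e3 e4]]] := Fnz _ _ h2.
    + by rewrite e2 e4 (iI _ _ (etrans (esym e1) e3)).
    + by move: (iIJ s1 s2); rewrite -e1 e3 eqxx.
    + by move: (iIJ s2 s1); rewrite -e3 e1 eqxx.
    + by rewrite e2 e4 (iJ _ _ (etrans (esym e1) e3)).
  - move=> q p1 p2 h1 h2.
    have [s1 [[e1 e2]|[e1 e2]]] := Fnz _ _ h1; have [s2 [[e3 e4]|[e3 e4]]] := Fnz _ _ h2.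
    + by rewrite e1 e3 (iJ _ _ (etrans (esym e2) e4)).
    + by move: (iIJ s2 s1); rewrite -e4 e2 eqxx.
    + by move: (iIJ s1 s2); rewrite -e2 e4 eqxx.
    + by rewrite e1 e3 (iI _ _ (etrans (esym e2) e4)).
  - move=> p q; case: (boolP (F p q != 0)) => [h|/negbNE/eqP ->]; last by rewrite cmod0.
    have le_m s : ncdist D (ii s) (jj s) / w s <= m.
      exact: le_bigmax.
    have [s [[e1 e2]|[e1 e2]]] := Fnz _ _ h; rewrite FE cmodM e1 e2 ?dm ?dm';
      apply: le_trans (le_m s); rewrite mulrC; (apply: ler_wpM2r; first by rewrite invr_ge0 ltW).
      by rewrite cmodB; exact: ncdist_ub.
    exact: ncdist_ub.
have hD' : opnorm (commut D' (piv a)) <= 1 + m.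
  have -> : commut D' (piv a) = commut D (piv a) + F by rewrite /F addrC subrK.
  by apply: le_trans (opnormD _ _) _; apply: lerD.
have i0 : 0 <= (1 + m)^-1 by rewrite invr_ge0 ltW.
pose b := ((((1 + m)^-1)%:C)%C) *: a.
have hb : opnorm (commut D' (piv b)) <= 1.
  rewrite commutZ; apply: le_trans (opnormZ _ _) _.
  by rewrite cmodR ger0_norm // ler_pdivrMl // mulr1.
have := ncdist_ub x y cD' hb.
rewrite /b !mxE -mulrBr cmodM cmodR ger0_norm //.
by rewrite ler_pdivrMl.
Qed.

End Main.

Lemma final_alg (R : realType) (d d' W : R) : 0 < d -> 0 < d' -> 0 < W ->
  d <= (1 + d / W) * d' -> d' <= (1 + d' / W) * d -> `|d^-1 - d'^-1| <= W^-1.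
Proof.
move=> dp dp' Wp h1 h2.
have dn : d != 0 by rewrite gt_eqF.
have dn' : d' != 0 by rewrite gt_eqF.
have Wn : W != 0 by rewrite gt_eqF.
have ip : 0 <= d^-1 * d'^-1 by apply: mulr_ge0; rewrite invr_ge0 ltW.
rewrite ler_norml; apply/andP; split; rewrite -subr_ge0.
  have -> : d^-1 - d'^-1 - - W^-1 = d^-1 * d'^-1 * ((1 + d/W) * d' - d) by field; rewrite Wn dn dn'.
  by apply: mulr_ge0 => //; rewrite subr_ge0.
have -> : W^-1 - (d^-1 - d'^-1) = d^-1 * d'^-1 * ((1 + d'/W) * d - d') by field; rewrite Wn dn dn'.
by apply: mulr_ge0 => //; rewrite subr_ge0.
Qed.

Theorem mainTheorem2 (R : realType) (n : nat) (D D' : 'M[R[i]]_n)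
  (k : nat) (ii jj : 'I_k -> 'I_n) (w : 'I_k -> R) (x y : 'I_n) :
  self_adjoint D -> self_adjoint D' ->
  graph_connected D -> graph_connected D' ->
  (* the 2k vertices i_1, j_1, ..., i_k, j_k are pairwise distinct *)
  injective ii -> injective jj -> (forall s t, ii s != jj t) ->
  (* D and D' agree outside the positions (i_s, j_s) and (j_s, i_s) *)
  (forall p q : 'I_n,
      (forall s, ~ (p = ii s /\ q = jj s) /\ ~ (p = jj s /\ q = ii s)) ->
      D p q = D' p q) ->
  (forall s, 0 < w s) ->
  (forall s,
      (D (ii s) (jj s) = 0 /\ cmod (D' (ii s) (jj s)) = (w s)^-1) \/
      (D' (ii s) (jj s) = 0 /\ cmod (D (ii s) (jj s)) = (w s)^-1)) ->
  let d := ncdist D x y in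
  let d' := ncdist D' x y in
  let m := \big[Num.max/0]_(s < k) (ncdist D (ii s) (jj s) / w s) in
  let m' := \big[Num.max/0]_(s < k) (ncdist D' (ii s) (jj s) / w s) in
  (d / (1 + m) <= d' /\ d' <= (1 + m') * d) /\
  ((k = 1)%N ->
   forall s : 'I_k,
     ((ii s == x) && (jj s == y)) || ((ii s == y) && (jj s == x)) ->
     `|d^-1 - d'^-1| <= (w s)^-1).
Proof.
move=> sD sD' cD cD' iI iJ iIJ agr wpos hor d d' m m'.
have h1 : d <= (1 + m) * d' := main_dir x y sD sD' cD cD' iI iJ iIJ agr wpos hor.
have agr' : forall p q : 'I_n,
      (forall s, ~ (p = ii s /\ q = jj s) /\ ~ (p = jj s /\ q = ii s)) ->
      D' p q = D p q.
  by move=> p q hpq; symmetry; exact: agr.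
have hor' : forall s,
      (D' (ii s) (jj s) = 0 /\ cmod (D (ii s) (jj s)) = (w s)^-1) \/
      (D (ii s) (jj s) = 0 /\ cmod (D' (ii s) (jj s)) = (w s)^-1).
  by move=> s; case: (hor s) => h; [right|left]; exact: h.
have h2 : d' <= (1 + m') * d := main_dir x y sD' sD cD' cD iI iJ iIJ agr' wpos hor'.
have d0 : 0 <= d := ncdist_ge0 x y cD.
have d'0 : 0 <= d' := ncdist_ge0 x y cD'.
have m0 : 0 <= m by rewrite /m; exact: bigmax_ge_id.
have m1 : 0 < 1 + m by apply: (@lt_le_trans _ _ 1); [exact: ltr01| rewrite lerDl].
split.
  split; last exact: h2.
  by rewrite (ler_pdivrMr _ _ m1) mulrC; exact: h1.
move=> hk s hs.
have alls t : t = s.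
  have ht : ((t : nat) < 1)%N by rewrite -hk.
  have hs' : ((s : nat) < 1)%N by rewrite -hk.
  move: ht hs'; rewrite !ltnS !leqn0 => /eqP ht /eqP hs'.
  exact: (ord_inj (etrans ht (esym hs'))).
have Wp := wpos s.
have em : m = ncdist D (ii s) (jj s) / w s.
  apply/le_anti/andP; split; last by rewrite /m /m'; exact: le_bigmax.
  rewrite /m /m'; apply: bigmax_le => [|t _]; last by rewrite (alls t).
  by apply: divr_ge0; [exact: ncdist_ge0|exact: ltW].
have em' : m' = ncdist D' (ii s) (jj s) / w s.
  apply/le_anti/andP; split; last by rewrite /m /m'; exact: le_bigmax.
  rewrite /m /m'; apply: bigmax_le => [|t _]; last by rewrite (alls t).
  by apply: divr_ge0; [exact: ncdist_ge0|exact: ltW].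
have ed : ncdist D (ii s) (jj s) = d.
  case/orP: hs => /andP[/eqP -> /eqP ->]; first reflexivity.
  exact: (ncdistC y x cD).
have ed' : ncdist D' (ii s) (jj s) = d'.
  case/orP: hs => /andP[/eqP -> /eqP ->]; first reflexivity.
  exact: (ncdistC y x cD').
rewrite em ed in h1; rewrite em' ed' in h2.
have [dz|dnz] := eqVneq d 0.
  have hd' : d' = 0.
    apply/le_anti/andP; split; last exact: d'0.
    move: h2; rewrite dz mulr0 => h; exact: h.
  rewrite dz hd' invr0 subrr normr0 invr_ge0; exact: ltW.
have [dz'|dnz'] := eqVneq d' 0.
  have hd : d = 0.
    apply/le_anti/andP; split; last exact: d0.
    move: h1; rewrite dz' mulr0 => h; exact: h.
  exfalso; move/eqP: dnz; apply; exact: hd.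
have dp : 0 < d by rewrite lt_def dnz d0.
have dp' : 0 < d' by rewrite lt_def dnz' d'0.
exact: (final_alg dp dp' Wp h1 h2).
Qed.
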